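(* Let $k$ be an odd positive integer and let $\zeta$ be a primitive $2k$-th root of unity. Let $Q_k$ denote the set of quasipolarities of $\mathbb{Z}/2k\mathbb{Z}$. Then \[ \sum_{\pi\in Q_{k}}\prod_{j=0}^{2k-1}\frac{1+\zeta^{j-\pi(j)}}{1-\zeta^{j-\pi(j)}} = 0. \]
   Context: The affine general linear group $\overrightarrow{GL}(\mathbb{Z}/2k\mathbb{Z})$ consists of the maps $e^{u}.v:\mathbb{Z}/2k\mathbb{Z}\to\mathbb{Z}/2k\mathbb{Z}$, $x\mapsto vx+u$, with $u\in\mathbb{Z}/2k\mathbb{Z}$ and $v\in(\mathbb{Z}/2k\mathbb{Z})^{\times}$. A quasipolarity is an element $\pi$ of this group that is an involution ($\pi\circ\pi=\mathrm{id}$) and a derangement ($\pi(x)\neq x$ for all $x$). Elements $j\in\{0,\dots,2k-1\}$ are identified with residues mod $2k$; the exponent $j-\pi(j)$ is taken mod $2k$ (well defined since $\zeta^{2k}=1$), and denominators are nonzero because $\pi$ is a derangement. *)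

(* Defs.v *)
From mathcomp Require Import all_boot all_order all_algebra all_field.
Set Implicit Arguments. Unset Strict Implicit. Unset Printing Implicit Defensive.
Import GRing.Theory.
Local Open Scope ring_scope.

Definition affine_GL (n : nat) (f : {ffun 'Z_n -> 'Z_n}) : bool :=
  [exists u : 'Z_n, exists v : 'Z_n,
     (v \is a GRing.unit) && [forall x : 'Z_n, f x == v * x + u]].

Definition quasipolarity (n : nat) (f : {ffun 'Z_n -> 'Z_n}) : bool :=
  [&& affine_GL f, [forall x : 'Z_n, f (f x) == x] & [forall x : 'Z_n, f x != x]].

Definition Qset (n : nat) : {set {ffun 'Z_n -> 'Z_n}} := [set f | quasipolarity f].

(* Main.v *)
Require Import Defs.
From mathcomp Require Import all_boot all_order all_algebra all_field.
From mathcomp Require Import ring zify.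
Import GRing.Theory.
Local Open Scope ring_scope.

Lemma Zp_natE (k m : nat) : (0 < k)%N ->
  ((m%:R : 'Z_(2 * k)) = 0) <-> (2 * k %| m)%N.
Proof.
move=> k0; have n2 : (1 < 2 * k)%N by lia.
rewrite Zp_nat; split.
- move/(congr1 val) => /=; rewrite Zp_cast // => h; exact/eqP.
- move=> h; apply/val_inj => /=; rewrite Zp_cast //; exact/eqP.
Qed.

Lemma Zp_valk (k : nat) : (0 < k)%N -> nat_of_ord (k%:R : 'Z_(2 * k)) = k.
Proof.
move=> k0; have n2 : (1 < 2 * k)%N by lia.
rewrite Zp_nat /= Zp_cast // modn_small //.
lia.
Qed.

Theorem theorem2p1 (k : nat) (hk : odd k) (z : algC)
  (hz : (2 * k)%N.-primitive_root z) :
  \sum_(p in Qset (2 * k))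
     \prod_(j : 'Z_(2 * k))
        ((1 + z ^+ (nat_of_ord (j - p j))) / (1 - z ^+ (nat_of_ord (j - p j))))
  = 0.
Proof.
have k0 : (0 < k)%N by case: k hk hz.
have n2 : (1 < 2 * k)%N by lia.
have zk : z ^+ k = -1.
  have : (z ^+ k) ^+ 2 == 1 by rewrite -exprM mulnC (prim_expr_order hz).
  rewrite sqrf_eq1 => /orP[|/eqP //].
  rewrite -(expr0 z) (eq_prim_root_expr hz) mod0n modn_small.
    by rewrite eqn0Ngt k0.
  lia.
apply: big1 => p; rewrite inE => /and3P[/existsP[u /existsP[v /andP[vU /forallP Hf]]] /forallP Hinv /forallP Hder].
have pE x : p x = v * x + u by apply/eqP.
set U := nat_of_ord u; set V := nat_of_ord v.
have uE : u = U%:R by rewrite natr_Zp.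
have vE : v = V%:R by rewrite natr_Zp.
have oV : odd V.
  move: vU; rewrite vE unitZpE //; apply: contraTT => eV.
  rewrite /coprime; apply/negP => /eqP g1.
  have : (2 %| gcdn (2 * k) V)%N by rewrite dvdn_gcd dvdn_mulr // dvdn2.
  by rewrite g1.
have dU : (2 * k %| (V + 1) * U)%N.
  apply/(@Zp_natE k _ k0); rewrite natrM natrD -uE -vE.
  have := eqP (Hinv 0); rewrite !pE mulr0 add0r => h.
  by rewrite mulrDl mul1r.
set c := odd U.
have eJ : ~~ odd (U + c * k)%N by rewrite oddD oddM hk /c; case: (odd U).
set J := ((U + c * k)./2)%N.
have J2 : (2 * J = U + c * k)%N.
  by rewrite /J -[RHS](odd_double_half (U + c * k)) (negbTE eJ) add0n mul2n.
have dJ : (2 * k %| (V + 1) * J)%N.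
  rewrite Gauss_dvd ?coprime2n //; apply/andP; split.
    by rewrite dvdn_mulr // dvdn2 addn1 /= oV.
  rewrite -(@dvdn_pmul2l 2) // mulnCA J2 mulnDr.
  apply: dvdn_add => //.
  have : (2 %| V + 1)%N by rewrite dvdn2 addn1 /= oV.
  case/dvdnP => q ->.
  by apply/dvdnP; exists (q * c)%N; lia.
set j : 'Z_(2 * k) := J%:R.
have h1 : (v + 1) * j = 0.
  rewrite vE /j; have -> : (V%:R + 1 : 'Z_(2*k)) = (V + 1)%N%:R by rewrite natrD.
  by rewrite -natrM; apply/(@Zp_natE k _ k0).
have h2 : j + j = u + (c * k)%:R.
  by rewrite uE -natrD addnn -mul2n J2 natrD.
have vj : v * j = - j.
  by apply/eqP; rewrite -addr_eq0 -[X in _ + X]mul1r -mulrDl h1.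
case cE : c h2 => h2.
- have hjk : j - p j = k%:R; last first.
    have hk' : nat_of_ord (j - p j) = k by rewrite hjk Zp_valk.
    apply/eqP; rewrite (bigD1 j) // !mulf_eq0; apply/orP; left; apply/orP; left.
    set e := nat_of_ord _; have -> : e = k by exact: hk'.
    by rewrite zk subrr.
  rewrite pE vj; rewrite mul1n in h2.
  have -> : (k%:R : 'Z_(2*k)) = j + j - u by rewrite h2 [u + _]addrC addrK.
  by rewrite opprD opprK addrA.
- exfalso; have := Hder j; rewrite pE; move/eqP; apply.
  rewrite mul0n addr0 in h2.
  by rewrite vj -h2 addKr.
Qed.
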